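(* For every infinite cardinal $\theta$ the following are equivalent: (1) $\theta<\mathfrak{r}$. (2) For every singular cardinal $\kappa$ of countable cofinality and every set $A\subseteq[\kappa]^\omega$ consisting of cofinal subsets of $\kappa$ with $|A|\le\theta$, there is $E\subseteq\kappa$ such that for every $a\in A$, both $a\cap E$ and $a\setminus E$ are infinite. (3) There is a singular cardinal $\kappa$ of countable cofinality such that for every set $A\subseteq[\kappa]^\omega$ consisting of cofinal subsets of $\kappa$ with $|A|\le\theta$, there is $E\subseteq\kappa$ such that for every $a\in A$, both $a\cap E$ and $a\setminus E$ are infinite.
   Context: The reaping number $\mathfrak{r}$ is the least cardinality of a set $A\subseteq[\omega]^\omega$ such that for every $b\in[\omega]^\omega$ there is $a\in A$ with $a\setminus b$ or $a\cap b$ finite. *)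

(* Defs.v *)
From HB Require Import structures.
From mathcomp Require Import all_boot all_order all_algebra.
From mathcomp Require Import all_classical.
Set Implicit Arguments. Unset Strict Implicit. Unset Printing Implicit Defensive.

Local Open Scope classical_set_scope.
Local Open Scope card_scope.

Definition infsub_nat (a : set nat) : Prop := infinite_set a.

Definition reaping_family (A : set (set nat)) : Prop :=
  (forall a, A a -> infsub_nat a) /\
  forall b, infsub_nat b ->
    exists2 a, A a & (finite_set (a `\` b) \/ finite_set (a `&` b)).

(* theta < r, where r is the least cardinality of a reaping family and the
   infinite cardinal theta is given as the cardinality of the type Theta:
   no reaping family has cardinality <= theta. *)
Definition lt_reaping (Theta : Type) : Prop :=
  forall A : set (set nat), reaping_family A -> ~ (A #<= [set: Theta]).

Definition strict_well_order (K : Type) (lt : K -> K -> Prop) : Prop :=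
  (forall x, ~ lt x x) /\
  (forall x y z, lt x y -> lt y z -> lt x z) /\
  (forall x y, lt x y \/ x = y \/ lt y x) /\
  well_founded lt.

(* (K, lt) represents a cardinal kappa: a well-order (the von Neumann ordinal
   kappa up to isomorphism) all of whose proper initial segments have strictly
   smaller cardinality than K (initial ordinal). *)
Definition is_cardinal (K : Type) (lt : K -> K -> Prop) : Prop :=
  strict_well_order lt /\
  forall x : K, ~ ([set: K] #<= [set y | lt y x]).

Definition cofinal (K : Type) (lt : K -> K -> Prop) (a : set K) : Prop :=
  forall x : K, exists2 y, a y & lt x y.

Definition cof_omega (K : Type) (lt : K -> K -> Prop) : Prop :=
  exists f : nat -> K, (forall n, lt (f n) (f n.+1)) /\ cofinal lt (range f).

Definition singular_cof_omega (K : Type) (lt : K -> K -> Prop) : Prop :=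
  is_cardinal lt /\ cof_omega lt /\ ~ ([set: K] #<= [set: nat]).

Definition ctbl_inf (K : Type) (a : set K) : Prop :=
  countable a /\ infinite_set a.

Definition cofinal_split_prop (Theta K : Type) (lt : K -> K -> Prop) : Prop :=
  forall A : set (set K),
    (forall a, A a -> ctbl_inf a /\ cofinal lt a) ->
    A #<= [set: Theta] ->
    exists E : set K, forall a, A a ->
      infinite_set (a `&` E) /\ infinite_set (a `\` E).

(* Main.v *)
Require Import Defs.
From Stdlib Require Eqdep_dec PeanoNat.
From mathcomp Require Import all_boot all_order all_algebra all_classical.
From mathcomp Require Import zify wochoice.
Set Implicit Arguments. Unset Strict Implicit. Unset Printing Implicit Defensive.
Local Open Scope classical_set_scope.
Local Open Scope card_scope.

Lemma mk_le T U (A : set T) (B : set U) (f : T -> U) :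
  set_fun A B f -> set_inj A f -> A #<= B.
Proof.
move=> Hf Hi.
have : $|{injfun A >-> B}| by apply/injfunPex; exists f.
by case=> g; apply: inj_card_le g.
Qed.

Lemma seq_bound (s : seq nat) : exists N, forall x, x \in s -> (x < N)%N.
Proof.
elim: s => [|a s [N HN]]; first by exists 0%N.
exists (maxn a.+1 N) => x; rewrite in_cons => /orP[/eqP->|/HN]; lia.
Qed.

Lemma finite_bounded (A : set nat) : finite_set A -> exists N, forall x, A x -> (x < N)%N.
Proof.
move=> /finite_fsetP[X ->]; have [N HN] := seq_bound (finmap.enum_fset X).
by exists N => x /= Hx; apply: HN.
Qed.

Lemma bounded_finite (A : set nat) N : (forall x, A x -> (x < N)%N) -> finite_set A.
Proof. by move=> H; apply: (sub_finite_set _ (finite_II N)) => x /H. Qed.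

Lemma unbounded_infinite (A : set nat) : (forall N, exists2 x, A x & (N <= x)%N) -> infinite_set A.
Proof.
move=> H /finite_bounded[N HN]; have [x /HN] := H N; lia.
Qed.

Lemma infinite_unbounded (A : set nat) : infinite_set A -> forall N, exists2 x, A x & (N <= x)%N.
Proof.
move=> H N; apply: contrapT => HN; apply: H; apply: (@bounded_finite _ N) => x Ax.
rewrite ltnNge; apply/negP => Nx; apply: HN; by exists x.
Qed.

Lemma infinite_image_inv T U (f : T -> U) (A : set T) : infinite_set (f @` A) -> infinite_set A.
Proof. by move=> H /(finite_image f). Qed.

Lemma sval_inj T (A : set T) (u v : A) : sval u = sval v -> u = v.
Proof.
case: u => x p; case: v => y q /= E; subst y; f_equal; apply: Prop_irrelevance.
Qed.

Lemma cantor (X : Type) : ~ ([set: set X] #<= [set: X]).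
Proof.
move/card_leP=> [f].
pose g := fun S : set X => val (f (SigSub (mem_set (I : [set: set X] S)))).
have ginj : forall S S', g S = g S' -> S = S'.
  move=> S S' E.
  have : SigSub (mem_set (I : [set: set X] S)) = SigSub (mem_set (I : [set: set X] S')).
    apply: (@inj _ _ _ f); rewrite ?inE //.
    exact: sval_inj E.
  by move/(congr1 val).
pose D := [set x | exists S, g S = x /\ ~ S x].
have [H|H] := pselect (D (g D)).
  by case: (H) => S [/ginj E]; rewrite E.
by apply: (H); exists D; split.
Qed.

Section Easy.
Variables (K : Type) (lt : K -> K -> Prop) (f : nat -> K).
Hypotheses (irr : forall x, ~ lt x x)
  (tr : forall x y z, lt x y -> lt y z -> lt x z)
  (inc : forall n, lt (f n) (f n.+1)) (cof : cofinal lt (range f)).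

Lemma incr m n : (m < n)%N -> lt (f m) (f n).
Proof.
elim: n => [//|n IH]; rewrite ltnS leq_eqVlt => /orP[/eqP->|/IH h]; first exact: inc.
exact: tr h (inc n).
Qed.

Lemma finj : injective f.
Proof.
move=> m n E; apply/eqP; case: (ltngtP m n) => // h.
  by have := incr h; rewrite E => /irr.
by have := incr h; rewrite E => /irr.
Qed.

Lemma split_to_reaping Theta : cofinal_split_prop Theta lt -> lt_reaping Theta.
Proof.
move=> Hs R [Rinf Rreap] RT.
pose A := (fun r => f @` r) @` R.
have HA : forall a, A a -> ctbl_inf a /\ cofinal lt a.
  move=> _ [r Rr <-]; split; [split|].
  - exact: card_le_trans (card_image_le f r) (card_leT r).
  - move=> [n Hn]; apply: (Rinf r Rr); exists n; apply: card_eq_trans Hn.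
    rewrite card_eq_sym; apply: inj_card_eq; move=> x y _ _; exact: finj.
  - move=> x; have [_ [m _ <-] xm] := cof x.
    have [n rn mn] := infinite_unbounded (Rinf r Rr) m.
    exists (f n); first by exists n.
    move: mn; rewrite leq_eqVlt => /orP[/eqP<-//|/incr h]; exact: tr xm h.
have AT : A #<= [set: Theta] := card_le_trans (card_image_le _ _) RT.
have [E HE] := Hs A HA AT.
pose b := f @^-1` E.
have [bfin|binf] := pselect (finite_set b).
  have [r Rr _] := Rreap setT infinite_nat.
  have [H1 _] := HE (f @` r) (ex_intro2 _ _ r Rr erefl).
  apply: H1; apply: (sub_finite_set _ (finite_image f (@finite_setIr _ r b bfin))).
  by move=> _ [[n rn <-] En]; exists n.
case: (Rreap b binf) => r Rr [H|H].
  have [_ H2] := HE (f @` r) (ex_intro2 _ _ r Rr erefl).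
  apply: H2; apply: (sub_finite_set _ (finite_image f H)).
  by move=> _ [[n rn <-] En]; exists n.
have [H1 _] := HE (f @` r) (ex_intro2 _ _ r Rr erefl).
apply: H1; apply: (sub_finite_set _ (finite_image f H)).
by move=> _ [[n rn <-] En]; exists n.
Qed.

Lemma reaping_to_split Theta : lt_reaping Theta -> cofinal_split_prop Theta lt.
Proof.
move=> Hr A HA AT.
have gex : forall x, exists n, lt x (f n).
  by move=> x; have [_ [n _ <-] h] := cof x; exists n.
pose g x := sval (cid (gex x)).
have hg : forall x, lt x (f (g x)) by move=> x; exact: svalP (cid (gex x)).
have ginf : forall a, cofinal lt a -> infinite_set (g @` a).
  move=> a ca; apply: unbounded_infinite => N.
  have [y ay ly] := ca (f N).
  exists (g y); first by exists y.
  rewrite leqNgt; apply/negP => h.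
  exact: (irr (tr (hg y) (tr (incr h) ly))).
pose P := (fun a => g @` a) @` A.
have nrf : ~ reaping_family P.
  by move=> rf; apply: (Hr P rf); exact: card_le_trans (card_image_le _ _) AT.
have [b [binf Hb]] : exists b, infsub_nat b /\
    forall a, P a -> ~ finite_set (a `\` b) /\ ~ finite_set (a `&` b).
  apply: contrapT => nb; apply: nrf; split.
    by move=> _ [a Aa <-]; apply: ginf; exact: (HA a Aa).2.
  move=> b binf; apply: contrapT => nex; apply: nb; exists b; split => // a Pa.
  by split => fin; apply: nex; exists a => //; [left|right].
exists (g @^-1` b) => a Aa.
have [H1 H2] := Hb _ (ex_intro2 _ _ a Aa erefl).
split.
  move=> fin; apply: H2; apply: (sub_finite_set _ (finite_image g fin)).
  by move=> _ [[x ax <-] bx]; exists x.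
move=> fin; apply: H1; apply: (sub_finite_set _ (finite_image g fin)).
by move=> _ [[x ax <-] bx]; exists x.
Qed.

End Easy.

Fixpoint S (n : nat) : Type :=
  match n with 0 => nat | m.+1 => (S m + set (S m))%type end.
Definition L (n : nat) : Type :=
  match n with 0 => nat | m.+1 => set (S m) end.
Definition K0 := {n : nat & L n}.
Definition lev (p : K0) := projT1 p.
Definition dflt (n : nat) : L n :=
  match n return L n with 0 => 0%N | m.+1 => set0 end.

Definition getL (n : nat) (p : K0) : L n :=
  match p with existT k y =>
    match PeanoNat.Nat.eq_dec k n with left e => eq_rect k L y n e | right _ => dflt n end end.

Lemma getL_inj n p q : lev p = n -> lev q = n -> getL n p = getL n q -> p = q.
Proof.
case: p => k y; case: q => k' y' /= E E'; subst k k'.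
rewrite /getL; case: (PeanoNat.Nat.eq_dec n n) => [e|//].
by rewrite (Eqdep_dec.UIP_dec PeanoNat.Nat.eq_dec e erefl) /= => ->.
Qed.

Fixpoint toS (n : nat) : K0 -> S n :=
  match n return K0 -> S n with
  | 0 => fun p => getL 0 p
  | m.+1 => fun p => if lev p == m.+1 then inr (getL m.+1 p) else inl (toS m p)
  end.

Lemma toS_inj n p q : (lev p <= n)%N -> (lev q <= n)%N -> toS n p = toS n q -> p = q.
Proof.
elim: n => [|n IH] hp hq.
  by move=> h; apply: (@getL_inj 0) h; lia.
rewrite /=.
case: eqP => ep; case: eqP => eq //.
- by move=> [] h; apply: (@getL_inj n.+1) h.
- move=> [] /IH; apply; lia.
Qed.

Section WO.
Variables (T : eqType) (R : rel T).
Hypothesis wo : well_order R.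

Lemma wo_min (A : {pred T}) x : x \in A -> exists z, z \in A /\ forall w, w \in A -> R z w.
Proof. by move=> xA; have [z [[zA lb] _]] := wo (ex_intro _ x xA); exists z. Qed.

Lemma wo_refl x : R x x.
Proof.
have [z [zA lb]] := @wo_min (pred1 x) x (eqxx x).
move: zA; rewrite inE => /eqP E; subst; apply: lb; exact: eqxx.
Qed.

Lemma wo_tot x y : R x y || R y x.
Proof.
have xA : x \in [pred u | (u == x) || (u == y)] by rewrite inE /= eqxx.
have [z [zA lb]] := wo_min xA.
move: zA; rewrite inE /= => /orP[] /eqP E; subst z.
  by rewrite lb // inE /= eqxx orbT.
by rewrite lb ?orbT // inE /= eqxx.
Qed.

Lemma wo_anti x y : R x y -> R y x -> x = y.
Proof.
move=> xy yx.
have xA : x \in [pred u | (u == x) || (u == y)] by rewrite inE /= eqxx.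
have [z [_ uz]] := wo (ex_intro _ x xA).
have hx : minimum_of R [pred u | (u == x) || (u == y)] x.
  split=> // w; rewrite inE /= => /orP[] /eqP ->; by rewrite ?wo_refl.
have hy : minimum_of R [pred u | (u == x) || (u == y)] y.
  split; first by rewrite inE /= eqxx orbT.
  by move=> w; rewrite inE /= => /orP[] /eqP ->; rewrite ?wo_refl.
by rewrite -(uz _ hx) -(uz _ hy).
Qed.

Lemma wo_trans x y z : R x y -> R y z -> R x z.
Proof.
move=> xy yz.
have xA : x \in [pred u | (u == x) || (u == y) || (u == z)] by rewrite inE /= eqxx.
have [w [wA lb]] := wo_min xA.
move: wA; rewrite inE /= => /orP[/orP[]|] /eqP E; subst w.
- by apply: lb; rewrite inE /= eqxx !orbT.
- have E : x = y by apply: wo_anti => //; apply: lb; rewrite inE /= eqxx.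
  by rewrite E.
- have E : y = z by apply: wo_anti => //; apply: lb; rewrite inE /= eqxx !orbT.
  by rewrite -E.
Qed.

End WO.

Lemma wf_from_min T (lt : T -> T -> Prop) :
  (forall A : set T, A !=set0 -> exists2 z, A z & forall y, lt y z -> ~ A y) ->
  well_founded lt.
Proof.
move=> H x; apply: contrapT => nx.
have [z zA zmin] := H [set y | ~ Acc lt y] (ex_intro _ x nx).
apply: zA; constructor => y yz; apply: contrapT => ny; exact: zmin y yz ny.
Qed.

Definition R0 : rel K0 := sval (well_ordering_principle (classicType K0)).
Lemma wo0 : well_order (R0 : rel (classicType K0)).
Proof. exact: svalP (well_ordering_principle (classicType K0)). Qed.

Definition ltK (p q : K0) : Prop :=
  (lev p < lev q)%N \/ (lev p = lev q /\ R0 p q /\ p <> q).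

Lemma ltK_swo : strict_well_order ltK.
Proof.
split; [|split; [|split]].
- by move=> x [|[_ [_]]] //; rewrite ltnn.
- move=> x y z [h1|[e1 [r1 n1]]] [h2|[e2 [r2 n2]]].
  + left; lia.
  + left; lia.
  + left; lia.
  + right; split; first lia; split.
      exact: (@wo_trans _ _ wo0 x y z).
    move=> E; subst z; apply: n1; exact: (@wo_anti _ _ wo0 x y).
- move=> x y; case: (ltngtP (lev x) (lev y)) => h; [by left; left|by right; right; left|].
  have [->|nxy] := pselect (x = y); first by right; left.
  case/orP: (@wo_tot _ _ wo0 x y) => r.
    by left; right.
  by right; right; right; split => //; split => // E; apply: nxy.
- apply: wf_from_min => A [p0 Ap0].
  pose P := fun n => `[< exists p, A p /\ lev p = n >].
  have P0 : exists n, P n by exists (lev p0); apply/asboolP; exists p0.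
  case: (ex_minnP P0) => n /asboolP [p1 [Ap1 lp1]] nmin.
  have p1B : p1 \in ([pred p | `[< A p /\ lev p = n >]] : {pred classicType K0}).
    by rewrite inE /=.
  have [z [zB lb]] := wo_min wo0 p1B.
  move: zB; rewrite inE /= => -[Az lz].
  exists z => // y [h|[e [r nyz]]] Ay.
  + have : n <= lev y by apply: nmin; apply/asboolP; exists y.
    lia.
  + apply: nyz; apply: (@wo_anti _ _ wo0) => //; apply: lb.
    by rewrite inE /=; split => //; rewrite e.
Qed.

Definition fK (n : nat) : K0 := existT L n (dflt n).

Lemma ltK_singular : singular_cof_omega ltK.
Proof.
split; [split; first exact: ltK_swo|split].
- move=> x Hx.
  pose n := lev x.
  have H1 : [set: set (S n)] #<= [set: K0].
    apply: (@mk_le _ _ _ _ (fun s => existT L n.+1 s)) => // a b _ _ E.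
    exact: (Eqdep_dec.inj_pair2_eq_dec nat PeanoNat.Nat.eq_dec L n.+1 a b E).
  have H2 : [set y | ltK y x] #<= [set: S n].
    apply: (@mk_le _ _ _ _ (toS n)) => // a b ha hb E.
    apply: (toS_inj _ _ E).
      by move: ha; rewrite inE => -[h|[h _]]; rewrite /n; lia.
    by move: hb; rewrite inE => -[h|[h _]]; rewrite /n; lia.
  exact: (cantor (card_le_trans H1 (card_le_trans Hx H2))).
- exists fK; split; first by move=> n; left => /=.
  move=> x; exists (fK (lev x).+1); first by exists (lev x).+1.
  by left => /=.
- move=> Hn.
  have H1 : [set: set nat] #<= [set: K0].
    apply: (@mk_le _ _ _ _ (fun s => existT L 1%N s)) => // a b _ _ E.
    exact: (Eqdep_dec.inj_pair2_eq_dec nat PeanoNat.Nat.eq_dec L 1%N a b E).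
  exact: (cantor (card_le_trans H1 Hn)).
Qed.

Unset Implicit Arguments.

Theorem mainTheorem16 (Theta : Type) (Htheta : infinite_set [set: Theta]) :
  (lt_reaping Theta <->
   (forall (K : Type) (lt : K -> K -> Prop),
       singular_cof_omega lt -> cofinal_split_prop Theta lt))
  /\
  (lt_reaping Theta <->
   (exists (K : Type) (lt : K -> K -> Prop),
       singular_cof_omega lt /\ cofinal_split_prop Theta lt)).
Proof.
have to_split : forall (K : Type) (lt : K -> K -> Prop), singular_cof_omega lt ->
    lt_reaping Theta -> cofinal_split_prop Theta lt.
  move=> K lt [[[irr [tr _]] _] [[f [inc cof]] _]].
  exact: (reaping_to_split irr tr inc cof).
have of_split : forall (K : Type) (lt : K -> K -> Prop), singular_cof_omega lt ->
    cofinal_split_prop Theta lt -> lt_reaping Theta.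
  move=> K lt [[[irr [tr _]] _] [[f [inc cof]] _]].
  exact: (split_to_reaping irr tr inc cof).
split; split.
- by move=> Hr K lt Hs; apply: to_split.
- by move=> H; apply: (of_split _ _ ltK_singular); apply: H; exact: ltK_singular.
- by move=> Hr; exists K0, ltK; split; [exact: ltK_singular | exact: to_split ltK_singular Hr].
- by move=> [K [lt [Hs Hsp]]]; exact: of_split Hs Hsp.
Qed.
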